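(* Let $T$ be a finite tree and let $P=p_0p_1\dots p_k$ ($k\ge1$) be a path in $T$ such that each of $p_1,\dots,p_{k-1}$ has degree $2$ in $T$. Let $B$ be the vertex set of the component containing $p_k$ of the graph obtained from $T$ by deleting the edges of $P$. Let $T'$ be the tree obtained from $T$ by deleting all edges between $p_k$ and $\Gamma(p_k)\setminus\{p_{k-1}\}$ and adding the edges between $p_0$ and $\Gamma(p_k)\setminus\{p_{k-1}\}$ instead. If $k$ is odd, then for every $\ell\ge1$, \[\omega_{\ell}(p_0,T[B\cup P])-\omega_{\ell}(p_0,P)\leq \omega_{\ell}(p_0,T'[B\cup P])-\omega_{\ell}(p_0,P).\]
   Context: $\Gamma(v)$ is the set of neighbours of $v$ in $T$. For a graph $G$ containing the vertices of $B$ and $P$, $G[B\cup P]$ is the subgraph of $G$ induced by $B\cup\{p_0,\dots,p_k\}$. For a graph $G$, a vertex $x$ and $\ell\ge1$, $\omega_\ell(x,G)$ is the number of walks of length $\ell$ in $G$ starting at $x$. $P$ is regarded as a graph (the path). *)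

(* Defs.v *)
From mathcomp Require Import all_boot all_order all_algebra.
Set Implicit Arguments. Unset Strict Implicit. Unset Printing Implicit Defensive.

Section Graphs.
Variable V : finType.

Definition simple_graph (e : rel V) : Prop := symmetric e /\ irreflexive e.

Definition graph_connected (e : rel V) : Prop := forall x y, connect e x y.

Definition acyclic (e : rel V) : Prop :=
  forall c : seq V, uniq c -> 2 < size c -> ~~ cycle e c.

Definition is_tree (e : rel V) : Prop :=
  simple_graph e /\ graph_connected e /\ acyclic e.

Definition nbhd (e : rel V) (v : V) : {set V} := [set y | e v y].

Definition is_path (e : rel V) (p : nat -> V) (k : nat) : Prop :=
  (forall i j, i <= k -> j <= k -> p i = p j -> i = j) /\
  (forall i, i < k -> e (p i) (p i.+1)).

Definition path_edge (p : nat -> V) (k : nat) : rel V :=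
  fun x y => [exists i : 'I_k,
    ((x == p i) && (y == p i.+1)) || ((y == p i) && (x == p i.+1))].

Definition path_vertices (p : nat -> V) (k : nat) : {set V} :=
  [set p (nat_of_ord i) | i : 'I_k.+1].

Definition del_path_edges (e : rel V) (p : nat -> V) (k : nat) : rel V :=
  fun x y => e x y && ~~ path_edge p k x y.

Definition compB (e : rel V) (p : nat -> V) (k : nat) : {set V} :=
  [set x | connect (del_path_edges e p k) (p k) x].

Definition moved_tree (e : rel V) (p : nat -> V) (k : nat) : rel V :=
  let N := nbhd e (p k) :\ p k.-1 in
  fun x y =>
    (e x y && ~~ (((x == p k) && (y \in N)) || ((y == p k) && (x \in N))))
    || (((x == p 0) && (y \in N)) || ((y == p 0) && (x \in N))).

Definition induced (e : rel V) (S : {set V}) : rel V :=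
  fun x y => [&& x \in S, y \in S & e x y].

Fixpoint walks (e : rel V) (l : nat) (x : V) : nat :=
  match l with
  | 0 => 1
  | l'.+1 => \sum_(y | e x y) walks e l' y
  end.

End Graphs.

(* Main.v *)
Require Import Defs.
From mathcomp Require Import all_boot all_order all_algebra zify.
Import Order.TTheory GRing.Theory Num.Theory.

Lemma path_seg (V : finType) (e : rel V) (p : nat -> V) (k : nat) :
  (forall i, i < k -> e (p i) (p i.+1)) ->
  forall n a, a + n <= k -> path e (p a) [seq p i | i <- iota a.+1 n].
Proof.
move=> pe; elim=> [|n IH] a h //=.
rewrite pe ?IH //; lia.
Qed.


Lemma walksS (V : finType) (e : rel V) l x :
  walks e l.+1 x = \sum_(y | e x y) walks e l y.
Proof. by []. Qed.

Lemma walks_ext (V : finType) (e1 e2 : rel V) :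
  (forall x y, e1 x y = e2 x y) -> forall l x, walks e1 l x = walks e2 l x.
Proof.
move=> H; elim=> [|l IH] x //=.
by apply: eq_big => y; rewrite ?H ?IH.
Qed.

Lemma walks_iso (V : finType) (e1 e2 : rel V) (f : V -> V) :
  injective f -> (forall x y, e1 x y = e2 (f x) (f y)) ->
  forall l x, walks e1 l x = walks e2 l (f x).
Proof.
move=> fi H; elim=> [|l IH] x //=.
rewrite [RHS](reindex_inj fi) /=.
by apply: eq_big => y; rewrite ?H ?IH.
Qed.

Lemma walks_mono (V : finType) (e : rel V) :
  symmetric e -> forall l x, (exists z, e x z) -> walks e l x <= walks e l.+1 x.
Proof.
move=> sy; elim=> [|l IH] x [z exz].
  rewrite /= (bigD1 z) //=; lia.
rewrite walksS [walks e l.+2 x]walksS; apply: leq_sum => y exy.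
by apply: IH; exists x; rewrite sy.
Qed.

Lemma walks_ge1 (V : finType) (e : rel V) l x y :
  e x y -> walks e l y <= walks e l.+1 x.
Proof. by move=> exy; rewrite walksS (bigD1 y) //=; lia. Qed.

Lemma walks_ge2 (V : finType) (e : rel V) l x y z :
  e x y -> e x z -> y != z -> walks e l y + walks e l z <= walks e l.+1 x.
Proof.
move=> exy exz yz; rewrite walksS (bigD1 y) //= (bigD1 z) /=; last by rewrite exz eq_sym yz.
lia.
Qed.

Lemma walks_nb1 (V : finType) (e : rel V) l x y :
  (forall z, e x z = (z == y)) -> walks e l.+1 x = walks e l y.
Proof.
move=> H; rewrite walksS (eq_bigl (pred1 y)) ?big_pred1_eq // => z; by rewrite H.
Qed.

Lemma walks_nb2 (V : finType) (e : rel V) l x y1 y2 :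
  y1 != y2 -> (forall z, e x z = (z == y1) || (z == y2)) ->
  walks e l.+1 x = walks e l y1 + walks e l y2.
Proof.
move=> ne H; rewrite walksS (bigD1 y1) ?H ?eqxx //= (bigD1 y2) /=; last by rewrite H eqxx orbT eq_sym.
rewrite big1 ?addn0 // => z; rewrite H; case: (z == y1); case: (z == y2) => //.
Qed.

Lemma core (W : nat -> nat -> nat) (X : nat -> nat) (m : nat) :
  (forall l i, 0 < i -> i < m.*2.+1 -> W l.+1 i = W l i.-1 + W l i.+1) ->
  (forall l, W l.+1 m.*2.+1 = W l m.*2) ->
  (forall l, W l 1 + X l <= W l.+1 0) ->
  (forall l, W l 0 <= X l.+1) ->
  (forall i, W 0 i = 1) -> 1 <= X 0 ->
  forall l, (forall j, j <= m -> W l (m + j) <= W l (m - j)) /\ W l m.*2.+1 <= X l.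
Proof.
move=> H1 H2 H3 H4 H0 X0; elim=> [|l [IH IHk]].
  by split=> [j _|]; rewrite !H0.
split; last first.
  rewrite H2; apply: leq_trans (H4 l); have := IH m (leqnn m).
  by rewrite subnn -addnn.
move=> j jm; case: j jm => [|j] jm; first by rewrite addn0 subn0.
rewrite H1; [| lia | lia].
have A : W l (m + j.+1).-1 <= W l (m - j). 
  by have := IH j (ltnW jm); rewrite (_ : (m + j.+1).-1 = m + j) //; lia.
case: (ltnP j.+1 m) => hj.
  rewrite H1; [| lia | lia].
  have B := IH j.+2 hj.
  rewrite (_ : (m - j.+1).+1 = m - j); last by lia.
  rewrite (_ : (m + j.+1).+1 = m + j.+2); last by lia.
  rewrite (_ : (m - j.+1).-1 = m - j.+2); last by lia.
  lia.
have jm' : j.+1 = m by lia.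
rewrite (_ : m - j.+1 = 0); last by lia.
have := H3 l.
rewrite (_ : (m + j.+1).+1 = m.*2.+1); last by lia.
rewrite (_ : m - j = 1) in A; last by lia.
lia.
Qed.

Definition sig {V : finType} (p : nat -> V) (k : nat) (x : V) : V :=
  if [pick i : 'I_k.+1 | p i == x] is Some i then p (k - i) else x.

Theorem corollary4 (V : finType) (e : rel V) (p : nat -> V) (k : nat) :
  is_tree e ->
  1 <= k ->
  is_path e p k ->
  (forall i, 0 < i -> i < k -> #|nbhd e (p i)| = 2) ->
  odd k ->
  forall l : nat, 1 <= l ->
    let S := compB e p k :|: path_vertices p k in
    ((walks (induced e S) l (p 0%N))%:Z - (walks (path_edge p k) l (p 0%N))%:Z
      <= (walks (induced (moved_tree e p k) S) l (p 0%N))%:Z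
         - (walks (path_edge p k) l (p 0%N))%:Z)%R.
Proof.
move=> [[sym irr] [_ acyc]] k1 [pinj pe] deg2 kodd l l1 /=.
set S := compB e p k :|: path_vertices p k.
have pinjb : forall i j, i <= k -> j <= k -> (p i == p j) = (i == j).
  move=> i j hi hj; apply/eqP/eqP => [|->//]; exact: pinj.
have peS : forall i, i < k -> e (p i.+1) (p i) by move=> i hi; rewrite sym pe.
have PE : forall x y, path_edge p k x y ->
    exists2 i, i < k & ((x = p i /\ y = p i.+1) \/ (y = p i /\ x = p i.+1)).
  move=> x y /existsP [i /orP [/andP [/eqP -> /eqP ->]|/andP [/eqP -> /eqP ->]]];
    exists i => //; by [left|right].
have PEi : forall i, i < k -> path_edge p k (p i) (p i.+1) && path_edge p k (p i.+1) (p i).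
  move=> i hi; apply/andP; split; apply/existsP; exists (Ordinal hi); by rewrite !eqxx ?orbT.
have T1 : forall i, 0 < i -> i < k -> forall y, e (p i) y = (y == p i.-1) || (y == p i.+1).
  move=> i i0 ik y.
  have E : nbhd e (p i) = [set p i.-1; p i.+1].
    apply/esym/eqP; rewrite eqEcard deg2 // cards2 pinjb; try lia.
    apply/andP; split; last by rewrite ltnS lt0b; apply/eqP; lia.
    apply/subsetP => z; rewrite !inE => /orP [/eqP->|/eqP->]; last exact: pe.
    rewrite -{1}(prednK i0) peS //; lia.
  by move/setP: E => /(_ y); rewrite /nbhd !inE.
have noconn : ~~ connect (del_path_edges e p k) (p k) (p 0).
  apply/negP => /connectP [q0 pq0 lq0].
  move: lq0; case/shortenP: pq0 => q pq uq _ lq; symmetry in lq.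
  have notin : forall i, 0 < i -> i < k -> p i \notin q.
    move=> i i0 ik; apply/negP => iq; move: (pq); case/splitPr: iq => q1 q2.
    rewrite cat_path /= => /and3P [_ /andP [ed nped] _].
    move: ed nped; rewrite sym T1 // => /orP [/eqP ->|/eqP ->].
      by rewrite -[in p i](prednK i0) (proj1 (andP (PEi _ _))) //; lia.
    by rewrite (proj2 (andP (PEi _ _))).
  move: uq; rewrite /= => /andP [pkq uq].
  set s := [seq p i | i <- iota 1 k.-1].
  have := acyc (p k :: q ++ s).
  have sz : 0 < size q.
    case: q pq lq {pkq uq notin} => [|y q] //= _ /eqP; rewrite pinjb //; lia.
  move=> H.
  have Sz : 2 < size (p k :: q ++ s).
    rewrite /= size_cat size_map size_iota.
    rewrite -subn1; case: (ltnP 1 k) => hk; first by rewrite ltnS -[2]/(1 + 1); apply: leq_add sz _; lia.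
    case: q sz pq lq {pkq uq notin H} => [|y [|z q]] //= _ /andP [/andP [_ np] _] ly.
    have k1' : k = 1 by lia.
    move: np; rewrite ly; subst k; by rewrite (proj2 (andP (PEi 0 _))).
  have C : cycle e (p k :: q ++ s).
    rewrite /= rcons_cat cat_path (sub_path _ pq) /=; last by move=> a b /andP [].
    rewrite lq.
    have -> : rcons s (p k) = [seq p i | i <- iota 1 k].
      rewrite /s -map_rcons; congr map.
      by rewrite -cats1 -[in RHS](prednK k1) -[k.-1.+1]addn1 iotaD add1n prednK.
    exact: (@path_seg V e p k pe k 0 (leqnn k)).
  have U : uniq (p k :: q ++ s).
    rewrite cons_uniq mem_cat negb_or pkq /= cat_uniq uq /=.
    rewrite map_inj_in_uniq ?iota_uniq ?andbT; last first.
      move=> a b; rewrite !mem_iota => ha hb; apply: pinj; lia.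
    apply/andP; split.
      apply/mapP => [[i]]; rewrite mem_iota => hi /eqP; rewrite pinjb; lia.
    apply/hasP => [[x /mapP [i]]]; rewrite mem_iota => hi -> /=.
    apply/negP; apply: notin; lia.
  by move/negP: (H U Sz).
have inPv : forall x, x \in path_vertices p k -> exists2 i, i <= k & x = p i.
  by move=> x /imsetP [i _ ->]; exists i => //; rewrite -ltnS ltn_ord.
have PS : forall i, i <= k -> p i \in S.
  move=> i hi; rewrite /S inE; apply/orP; right; apply/imsetP.
  by exists (Ordinal (hi : i < k.+1)).
have Bdef : forall x, (x \in compB e p k) = connect (del_path_edges e p k) (p k) x.
  by move=> x; rewrite /compB inE.
have T2 : forall y, y \in S -> e (p 0) y -> y = p 1.
  move=> y yS e0y; case: (y =P p 1) => // ne; exfalso.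
  have yB : y \in compB e p k.
    move: yS; rewrite /S inE => /orP [//|/inPv [j hj yj]].
    case: (ltnP j k) => hjk; last first.
      by rewrite yj (_ : j = k) ?Bdef ?connect0 //; lia.
    case: j hj yj hjk => [|j] hj yj hjk.
      by move: e0y; rewrite yj irr.
    move: e0y; rewrite sym yj T1 //= => /orP [/eqP|/eqP] h.
      have h' := pinj _ _ (leq0n _) (ltnW (leq_trans (leqnSn _) hjk)) h.
      by case: ne; rewrite yj -h'.
    by have := pinj _ _ (leq0n _) hjk h.
  move/negP: noconn; apply; apply: connect_trans (_ : connect _ y (p 0)).
    by rewrite -Bdef.
  apply: connect1; rewrite /del_path_edges sym e0y /=; apply/negP => /PE [i ik].
  case=> [[_ h]|[h yi]].
    by have := pinj _ _ (leq0n _) ik h.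
  by have := pinj _ _ (leq0n _) (ltnW ik) h => i0; apply: ne; rewrite yi -i0.
set N := nbhd e (p k) :\ p k.-1.
have inN : forall y, (y \in N) = (y != p k.-1) && e (p k) y.
  by move=> y; rewrite /N /nbhd !inE.
have NB : forall y, y \in N -> y \in compB e p k.
  move=> y; rewrite inN Bdef => /andP [ny eky]; apply: connect1.
  rewrite /del_path_edges eky /=; apply/negP => /PE [i ik].
  case=> [[h _]|[yi h]].
    by have := pinj _ _ (leqnn _) (ltnW ik) h; lia.
  have := pinj _ _ (leqnn _) ik h => ki; move/eqP: ny; apply.
  by rewrite yi ki.
have NP : forall y j, y \in N -> j <= k -> y != p j.
  move=> y j yN jk; apply/eqP => yj; move: yN; rewrite inN yj => /andP [nj ekj].
  case: (ltnP j k) => hjk; last first.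
    by move: ekj; rewrite (_ : j = k) ?irr //; lia.
  case: j jk yj nj ekj hjk => [|j] jk yj nj ekj hjk.
    have := T2 _ (PS _ (leqnn k)); rewrite sym => /(_ ekj) h.
    have := pinj _ _ (leqnn _) k1 h => k1'; move: nj; rewrite k1' /= eqxx //.
  move: ekj; rewrite sym T1 //= => /orP [/eqP|/eqP] h.
    by have := pinj _ _ (leqnn _) (ltnW (leq_trans (leqnSn _) hjk)) h; lia.
  have := pinj _ _ (leqnn _) hjk h => kj; move: nj; rewrite kj /= eqxx //.
have ENP : forall a h, a <= k -> (forall j, j <= k -> h != p j) -> h \in S ->
    e (p a) h = (a == k) && (h \in N).
  move=> a h ak hnp hS; case: (ltnP a k) => hak; last first.
    by rewrite (_ : a = k) ?eqxx ?inN ?hnp //=; [rewrite -subn1; lia| lia].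
  rewrite (_ : (a == k) = false) /=; last by apply/eqP; lia.
  case: a ak hak => [|a] ak hak.
    by apply/negP => /(T2 _ hS) h1; move/eqP: (hnp 1 k1).
  rewrite T1 //=; apply/negP => /orP [/eqP h1|/eqP h1].
    by move/eqP: (hnp a (ltnW (ltnW hak))).
  by move/eqP: (hnp a.+2 hak).
have T4 : forall i j, i <= k -> j <= k -> e (p i) (p j) = (j == i.+1) || (i == j.+1).
  have A : forall i j, i < k -> j <= k -> e (p i) (p j) = (j == i.+1) || (i == j.+1).
    move=> [|i] j ik jk.
      apply/idP/idP => [/(T2 _ (PS _ jk)) h|].
        by have := pinj _ _ jk k1 h => ->.
      by rewrite orbF => /eqP ->; apply: pe.
    rewrite T1 //= !pinjb //; try lia.
  move=> i j ik jk; case: (ltnP i k) => hik; first exact: A.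
  have -> : i = k by lia.
  case: (ltnP j k) => hjk.
    by rewrite sym A //; lia.
  have -> : j = k by lia.
  by rewrite irr; lia.
have pN : forall a, a <= k -> (p a \in N) = false.
  by move=> a ha; apply/negP => h; move/eqP: (NP _ a h ha).
have movedE : forall x y, moved_tree e p k x y =
   (e x y && ~~ (((x == p k) && (y \in N)) || ((y == p k) && (x \in N))))
    || (((x == p 0) && (y \in N)) || ((y == p 0) && (x \in N))).
  by [].
set R1 := induced e S.
set R2 := induced (moved_tree e p k) S.
have R1sym : forall x y, R1 x y = R1 y x.
  by move=> x y; rewrite /R1 /induced sym; case: (x \in S); case: (y \in S).
have R2sym : forall x y, R2 x y = R2 y x.
  move=> x y; rewrite /R2 /induced !movedE sym.
  case: (x \in S); case: (y \in S); case: (e y x); case: (x == p k); case: (y == p k);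
  case: (x == p 0); case: (y == p 0); case: (x \in N); by case: (y \in N).
have sig_p : forall i, i <= k -> sig p k (p i) = p (k - i).
  move=> i hi; rewrite /sig; case: pickP => [j /eqP hj | H].
    by rewrite (pinj _ _ _ hi hj) // -ltnS.
  by move: (H (Ordinal (hi : i < k.+1))); rewrite eqxx.
have sig_np : forall x, (forall j, j <= k -> x != p j) -> sig p k x = x.
  move=> x H; rewrite /sig; case: pickP => [j /eqP hj | //].
  by move/eqP: (H j (ltn_ord j)); rewrite hj.
have cls : forall x, (exists2 i, i <= k & x = p i) \/ (forall j, j <= k -> x != p j).
  move=> x; case: (pickP (fun i : 'I_k.+1 => p i == x)) => [j /eqP hj|H].
    by left; exists j => //; rewrite -ltnS ltn_ord.
  right=> j hj; apply/eqP => xj; move: (H (Ordinal (hj : j < k.+1))).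
  by rewrite /= xj eqxx.
have key : forall i j, i <= k -> j <= k -> R1 (p i) (p j) = R2 (p (k - i)) (p (k - j)).
  move=> i j hi hj; rewrite /R1 /R2 /induced !PS ?leq_subr //= movedE.
  rewrite !pN ?leq_subr // !andbF /= orbF andbT !T4 ?leq_subr //; lia.
have key2 : forall i h, i <= k -> (forall j, j <= k -> h != p j) ->
    R1 (p i) h = R2 (p (k - i)) h.
  move=> i h hi hnp; rewrite /R1 /R2 /induced !PS ?leq_subr //=.
  case hS : (h \in S) => //=.
  rewrite movedE !ENP ?leq_subr // pN ?leq_subr // (negbTE (hnp k _)) //.
  rewrite (negbTE (hnp 0 _)) // !andbF !orbF !pinjb ?leq_subr //.
  by case: (h \in N); rewrite ?andbF ?andbT //=; lia.
have key3 : forall h1 h2, (forall j, j <= k -> h1 != p j) ->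
    (forall j, j <= k -> h2 != p j) -> R1 h1 h2 = R2 h1 h2.
  move=> h1 h2 n1 n2; rewrite /R1 /R2 /induced movedE.
  by rewrite !(negbTE (n1 _ _)) ?(negbTE (n2 _ _)) //= andbT orbF.
have equiv : forall x y, R1 x y = R2 (sig p k x) (sig p k y).
  move=> x y; case: (cls x) => [[i hi ->]|nx]; case: (cls y) => [[j hj ->]|ny].
  - by rewrite !sig_p // key.
  - by rewrite sig_p // sig_np // key2.
  - by rewrite sig_p // sig_np // R1sym key2 // R2sym.
  - by rewrite !sig_np // key3.
have sigK : cancel (sig p k) (sig p k).
  move=> x; case: (cls x) => [[i hi ->]|nx].
    by rewrite !sig_p ?leq_subr // subKn.
  by rewrite !sig_np.
have iso : forall l', walks R1 l' (p 0) = walks R2 l' (p k).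
  move=> l'; by rewrite (@walks_iso _ _ _ _ (can_inj sigK) equiv) sig_p // subn0.
rewrite lerD2r lez_nat.
case: (set_0Vmem N) => [N0|[c0 c0N]].
  have NF : forall y, (y \in N) = false by move=> y; rewrite N0 inE.
  rewrite (@walks_ext _ R1 R2) // => x y.
  by rewrite /R1 /R2 /induced movedE !NF !andbF /= andbT orbF.
rewrite iso.
have R2p01 : R2 (p 0) (p 1).
  by rewrite /R2 /induced !PS // movedE !pN // !andbF pe.
have c0S : c0 \in S by rewrite /S inE NB.
have R2p0c : R2 (p 0) c0.
  by rewrite /R2 /induced PS // c0S movedE eqxx c0N /= orbT.
have c1 : p 1 != c0 by rewrite eq_sym NP.
set m := k./2.
have km : k = m.*2.+1 by have := odd_double_half k; rewrite kodd; lia.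
have H1 : forall l' i, 0 < i -> i < m.*2.+1 ->
    walks R2 l'.+1 (p i) = walks R2 l' (p i.-1) + walks R2 l' (p i.+1).
  move=> l' i i0 ik; rewrite -km in ik; apply: walks_nb2.
    rewrite pinjb; lia.
  move=> z; rewrite /R2 /induced movedE PS /=; last lia.
  rewrite pN; last lia.
  rewrite !andbF pinjb; [|lia|lia]. rewrite (pinjb i 0); [|lia|lia].
  rewrite (_ : (i == k) = false); last lia.
  rewrite (_ : (i == 0) = false); last lia.
  rewrite /= orbF andbT T1 //.
  case: eqP => [->|_] /=; first by rewrite PS //; lia.
  case: eqP => [->|_] /=; [by rewrite PS //; lia | by rewrite andbF].
have H2 : forall l', walks R2 l'.+1 (p m.*2.+1) = walks R2 l' (p m.*2).
  move=> l'; rewrite -km; apply: walks_nb1 => z.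
  rewrite /R2 /induced movedE PS // eqxx pN // andbF orbF.
  rewrite (pinjb k 0) // (_ : (k == 0) = false) /=; last lia.
  rewrite andbF orbF inN.
  have km1 : k.-1 = m.*2 by lia.
  rewrite km1; case: (z =P p m.*2) => [->|ne] /=.
    rewrite PS; last lia.
    by rewrite andbT /= sym -km1 -[in p k](prednK k1) pe //; lia.
  by case: (z \in S); case: (e (p k) z).
have H3 : forall l', walks R2 l' (p 1) + walks R2 l' c0 <= walks R2 l'.+1 (p 0).
  by move=> l'; apply: walks_ge2.
have H4 : forall l', walks R2 l' (p 0) <= walks R2 l'.+1 c0.
  by move=> l'; apply: walks_ge1; rewrite R2sym.
have C := core (fun l i => walks R2 l (p i)) (fun l => walks R2 l c0) m H1 H2 H3 H4
   (fun _ => erefl) (leqnn 1).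
case: l l1 {iso} => [//|l'] _.
have [IH _] := C l'.
have := IH m (leqnn m); rewrite subnn addnn => h.
rewrite km H2; apply: leq_trans h _.
apply: walks_mono; last by exists (p 1).
by move=> x y; apply: R2sym.
Qed.
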